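(* Let $\mathbf{k}$ be a perfect field and $L/\mathbf{k}$ a quadratic extension. Let $p=\{p_1,p_2,p_3\}$ and $q=\{q_1,q_2,q_3\}$ be points of degree $3$ in $\mathcal{Q}^L$ such that for any $h\in\operatorname{Gal}(\overline{\mathbf{k}}/\mathbf{k})$ there exists $\sigma\in\mathrm{Sym}_3$ with $p_i^h=p_{\sigma(i)}$ and $q_i^h=q_{\sigma(i)}$ for $i=1,2,3$. Suppose that the geometric components of $p$ (resp. of $q$) lie on pairwise distinct rulings of $\mathcal{Q}^L_L\simeq\mathbb{P}^1_L\times\mathbb{P}^1_L$. Then there exists $\alpha\in\operatorname{Aut}_{\mathbf{k}}(\mathcal{Q}^L)$ such that $\alpha(p_i)=q_i$ for $i=1,2,3$.
   Context: With $g$ the generator of $\operatorname{Gal}(L/\mathbf{k})$, $\mathcal{Q}^L$ is the $\mathbf{k}$-structure on $\mathbb{P}^1_L\times\mathbb{P}^1_L$ given by the Galois action $([u_0:u_1],[v_0:v_1])\mapsto([v_0^g:v_1^g],[u_0^g:u_1^g])$. A point of degree $3$ is a $\operatorname{Gal}(\overline{\mathbf{k}}/\mathbf{k})$-orbit $\{p_1,p_2,p_3\}$ of cardinality $3$ in $\mathcal{Q}^L(\overline{\mathbf{k}})$; ''pairwise distinct rulings'' means no two of the $p_i$ lie on a common fibre of either projection. *)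

(* Defs.v *)
From HB Require Import structures.
From mathcomp Require Import all_boot all_order all_algebra all_fingroup all_field.
From Stdlib Require Import ClassicalEpsilon.
Set Implicit Arguments. Unset Strict Implicit. Unset Printing Implicit Defensive.
Import GRing.Theory.
Local Open Scope ring_scope.

Definition perfect_field (F : fieldType) : Prop :=
  forall p : nat, p \in [pchar F] -> forall x : F, exists y : F, y ^+ p = x.

Definition algebraic_over (k : fieldType) (K : closedFieldType)
  (iota : {rmorphism k -> K}) : Prop :=
  forall x : K, exists P : {poly k}, P != 0 /\ root (map_poly iota P) x.

(* h is an element of Gal(kbar/k): a field automorphism of K fixing iota(k). *)
Definition is_gal (k : fieldType) (K : closedFieldType)
  (iota : {rmorphism k -> K}) (h : {rmorphism K -> K}) : Prop :=
  bijective h /\ forall c : k, h (iota c) = iota c.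

(* Points of P^1(K) in homogeneous coordinates: nonzero row vectors [u0 u1];
   two vectors give the same point iff they are proportional. *)
Definition p1eq (K : fieldType) (u v : 'rV[K]_2) : Prop :=
  exists2 c : K, c != 0 & v = c *: u.

(* Kbar-points of Q^L : pairs of points of P^1(K) (since Q^L_L = P^1_L x P^1_L). *)
Definition Qpt (K : fieldType) := ('rV[K]_2 * 'rV[K]_2)%type.

Definition Qvalid (K : fieldType) (p : Qpt K) : Prop := p.1 != 0 /\ p.2 != 0.

Definition Qeq (K : fieldType) (p q : Qpt K) : Prop :=
  p1eq p.1 q.1 /\ p1eq p.2 q.2.

(* Galois action of h on Q^L(kbar): coordinatewise action of h, composed with
   the swap of the two factors iff h restricts to the nontrivial element g of
   Gal(L/k) (i.e. iff h does not fix j(L) pointwise).  This is the action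
   induced by the descent datum ([u],[v]) |-> ([v^g],[u^g]). *)
Definition Qact (k : fieldType) (L : fieldExtType k) (K : closedFieldType)
  (j : {rmorphism L -> K}) (h : {rmorphism K -> K}) (p : Qpt K) : Qpt K :=
  if excluded_middle_informative (forall l : L, h (j l) = j l)
  then (map_mx h p.1, map_mx h p.2)
  else (map_mx h p.2, map_mx h p.1).

(* A point of degree 3 of Q^L: a triple of pairwise distinct kbar-points forming
   a single Gal(kbar/k)-orbit. *)
Definition deg3_point (k : fieldType) (L : fieldExtType k) (K : closedFieldType)
  (iota : {rmorphism k -> K}) (j : {rmorphism L -> K}) (p : 'I_3 -> Qpt K) : Prop :=
  [/\ forall i, Qvalid (p i),
      forall i i', i != i' -> ~ Qeq (p i) (p i'),
      forall h, is_gal iota h -> forall i, exists i', Qeq (Qact j h (p i)) (p i')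
    & forall i, exists2 h, is_gal iota h & Qeq (Qact j h (p ord0)) (p i)].

(* The geometric components lie on pairwise distinct rulings:
   no two share a fibre of either projection. *)
Definition distinct_rulings (K : fieldType) (p : 'I_3 -> Qpt K) : Prop :=
  forall i i', i != i' -> ~ p1eq (p i).1 (p i').1 /\ ~ p1eq (p i).2 (p i').2.

(* Automorphisms of P^1_kbar x P^1_kbar: (x,y) |-> (xA, yB) or (x,y) |-> (yA, xB),
   with A, B in GL_2(kbar). *)
Record autP1P1 (K : fieldType) := AutP1P1 {
  aut_swap : bool; aut_A : 'M[K]_2; aut_B : 'M[K]_2 }.

Definition aut_valid (K : fieldType) (a : autP1P1 K) : Prop :=
  aut_A a \in unitmx /\ aut_B a \in unitmx.

Definition aut_apply (K : fieldType) (a : autP1P1 K) (p : Qpt K) : Qpt K :=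
  if aut_swap a then (p.2 *m aut_A a, p.1 *m aut_B a)
  else (p.1 *m aut_A a, p.2 *m aut_B a).

(* Aut_k(Q^L): automorphisms of Q^L_kbar = P^1 x P^1 commuting with the
   Galois action defining the k-structure Q^L (Galois descent). *)
Definition in_Aut_k_QL (k : fieldType) (L : fieldExtType k) (K : closedFieldType)
  (iota : {rmorphism k -> K}) (j : {rmorphism L -> K}) (a : autP1P1 K) : Prop :=
  aut_valid a /\
  forall h, is_gal iota h -> forall p, Qvalid p ->
    Qeq (Qact j h (aut_apply a p)) (aut_apply a (Qact j h p)).

(* Main.v *)
Require Import Defs.
From HB Require Import structures.
From mathcomp Require Import all_boot all_order all_algebra all_fingroup all_field.
From Stdlib Require Import ClassicalEpsilon.
From mathcomp Require Import ring.
Import GRing.Theory.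
Local Open Scope ring_scope.

Section H.
Set Implicit Arguments. Unset Strict Implicit.
Variable K : fieldType.
Definition c0 : 'I_2 := ord0.
Definition c1 : 'I_2 := ord_max.
Definition cr (u v : 'rV[K]_2) := u ord0 c0 * v ord0 c1 - u ord0 c1 * v ord0 c0.

Lemma ord2P (P : 'I_2 -> Prop) : P c0 -> P c1 -> forall i, P i.
Proof.
move=> h0 h1 [[|[|n]] Hn].
- by rewrite (_ : Ordinal Hn = c0) //; apply: val_inj.
- by rewrite (_ : Ordinal Hn = c1) //; apply: val_inj.
- by [].
Qed.

Lemma ord1P (P : 'I_1 -> Prop) : P ord0 -> forall i, P i.
Proof.
move=> h0 [[|n] Hn].
- by rewrite (_ : Ordinal Hn = ord0) //; apply: val_inj.
- by [].
Qed.

Lemma row2_eq (u v : 'rV[K]_2) :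
  u ord0 c0 = v ord0 c0 -> u ord0 c1 = v ord0 c1 -> u = v.
Proof.
move=> h0 h1; apply/rowP; exact: ord2P.
Qed.

Lemma row2_ne0 (u : 'rV[K]_2) : u != 0 -> u ord0 c0 != 0 \/ u ord0 c1 != 0.
Proof.
move=> hu; case: (eqVneq (u ord0 c0) 0) => h0; last by left.
case: (eqVneq (u ord0 c1) 0) => h1; last by right.
have : u = 0 by apply: row2_eq; rewrite mxE.
by move/eqP; rewrite (negbTE hu).
Qed.

Lemma crDl a b x y z : cr (a *: x + b *: y) z = a * cr x z + b * cr y z.
Proof. rewrite /cr !mxE; ring. Qed.
Lemma crDr a b x y z : cr z (a *: x + b *: y) = a * cr z x + b * cr z y.
Proof. rewrite /cr !mxE; ring. Qed.
Lemma crZ a b x y : cr (a *: x) (b *: y) = a * b * cr x y.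
Proof. rewrite /cr !mxE; ring. Qed.
Lemma crxx x : cr x x = 0.
Proof. rewrite /cr; ring. Qed.

Lemma cr_ne0 (u v : 'rV[K]_2) : u != 0 -> v != 0 -> ~ p1eq u v -> cr u v != 0.
Proof.
move=> hu hv hn; apply/negP => /eqP hc; apply: hn.
case: (eqVneq (u ord0 c0) 0) => h0.
- have h1 : u ord0 c1 != 0 by case: (row2_ne0 hu) => //; rewrite h0 eqxx.
  have hv0 : v ord0 c0 = 0.
    move: hc; rewrite /cr h0 mul0r sub0r => /eqP; rewrite oppr_eq0 mulf_eq0 (negbTE h1) /=.
    by move/eqP.
  have hv1 : v ord0 c1 != 0 by case: (row2_ne0 hv) => //; rewrite hv0 eqxx.
  exists (v ord0 c1 / u ord0 c1); first by rewrite mulf_neq0 ?invr_eq0.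
  apply: row2_eq; rewrite !mxE ?hv0 ?h0 ?mulr0 //.
  by rewrite mulfVK.
- have hv0 : v ord0 c0 != 0.
    apply/negP => /eqP hv0; case: (row2_ne0 hv); rewrite ?hv0 ?eqxx // => hv1.
    move: hc; rewrite /cr hv0 mulr0 subr0 => /eqP; rewrite mulf_eq0 (negbTE h0) (negbTE hv1).
    by [].
  exists (v ord0 c0 / u ord0 c0); first by rewrite mulf_neq0 ?invr_eq0.
  apply: row2_eq; rewrite !mxE; first by rewrite mulfVK.
  move/eqP: hc; rewrite /cr subr_eq0 => /eqP hc.
  by apply: (mulfI h0); rewrite mulrA mulrCA mulfV // mulr1 hc mulrC.
Qed.

Lemma comb_ex (u0 u1 w : 'rV[K]_2) : cr u0 u1 != 0 ->
  exists a b, [/\ a * cr u0 u1 = cr w u1, b * cr u0 u1 = cr u0 w & w = a *: u0 + b *: u1].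
Proof.
move=> hc; exists (cr w u1 / cr u0 u1), (cr u0 w / cr u0 u1).
split; rewrite ?mulfVK //.
apply: row2_eq; rewrite !mxE /cr; field; exact: hc.
Qed.

Lemma cr_coef x y a b c d : cr x y != 0 -> a *: x + b *: y = c *: x + d *: y ->
  a = c /\ b = d.
Proof.
move=> hc e; split.
- have := congr1 (cr^~ y) e; rewrite /= !crDl crxx !mulr0 !addr0.
  exact: mulIf.
- have := congr1 (cr x) e; rewrite /= !crDr crxx !mulr0 !add0r.
  exact: mulIf.
Qed.

Definition R2 (a b : K) : 'rV[K]_2 := \row_j (if j == c0 then a else b).
Definition rows2 (x y : 'rV[K]_2) : 'M[K]_2 :=
  \matrix_(i, j) (if i == c0 then x ord0 j else y ord0 j).

Lemma mul_rows2 (r x y : 'rV[K]_2) : r *m rows2 x y = r ord0 c0 *: x + r ord0 c1 *: y.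
Proof.
apply/rowP => j; rewrite !mxE !big_ord_recl big_ord0 !mxE /=.
rewrite addr0 (_ : lift ord0 ord0 = c1) //; exact: val_inj.
Qed.


Lemma rows2_unit (x y : 'rV[K]_2) : cr x y != 0 -> rows2 x y \in unitmx.
Proof.
move=> hc.
pose d := cr x y.
have /mulmx1_unit [] // : rows2 x y *m rows2 (R2 (y ord0 c1 / d) (- x ord0 c1 / d))
   (R2 (- y ord0 c0 / d) (x ord0 c0 / d)) = 1%:M.
have L1 : lift ord0 ord0 = c1 :> 'I_2 by apply: val_inj.
have hc' : x ord0 ord0 * y ord0 c1 - x ord0 c1 * y ord0 ord0 != 0 by exact: hc.
apply/matrixP; apply: ord2P; apply: ord2P;
  rewrite !mxE !big_ord_recl big_ord0 !mxE /= /d /cr L1 /c0 /=; field; exact: hc'.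
Qed.

Lemma key2 (x r : 'rV[K]_2) (c : K) (N M : 'M[K]_2) : N \in unitmx -> c != 0 ->
  c *: x = r *m N -> x *m (invmx N *m M) = c^-1 *: (r *m M).
Proof.
move=> hN hc h.
have -> : x = c^-1 *: (r *m N) by rewrite -h scalerA mulVf // scale1r.
by rewrite -scalemxAl mulmxA mulmxK.
Qed.

Lemma p1eq_inv (x : 'rV[K]_2) c : c != 0 -> p1eq (c *: x) x.
Proof.
move=> hc; exists c^-1; first by rewrite invr_eq0.
by rewrite scalerA mulVf // scale1r.
Qed.

Lemma p1eq_sym (x y : 'rV[K]_2) : p1eq x y -> p1eq y x.
Proof.
case=> c hc ->; exact: p1eq_inv.
Qed.

Lemma p1eq_trans (x y z : 'rV[K]_2) : p1eq x y -> p1eq y z -> p1eq x z.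
Proof.
case=> c hc -> [d hd ->]; exists (d * c); first by rewrite mulf_neq0.
by rewrite scalerA.
Qed.

Lemma p1eq_mul (x y : 'rV[K]_2) (M : 'M[K]_2) : p1eq x y -> p1eq (x *m M) (y *m M).
Proof.
case=> c hc ->; exists c => //; by rewrite scalemxAl.
Qed.

Definition i0 : 'I_3 := @Ordinal 3 0 isT.
Definition i1 : 'I_3 := @Ordinal 3 1 isT.
Definition i2 : 'I_3 := @Ordinal 3 2 isT.

Lemma ord3P (P : 'I_3 -> Prop) : P i0 -> P i1 -> P i2 -> forall i, P i.
Proof.
move=> h0 h1 h2 [[|[|[|n]]] Hn].
- by rewrite (_ : Ordinal Hn = i0) //; apply: val_inj.
- by rewrite (_ : Ordinal Hn = i1) //; apply: val_inj.
- by rewrite (_ : Ordinal Hn = i2) //; apply: val_inj.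
- by [].
Qed.

Lemma comb3 (u : 'I_3 -> 'rV[K]_2) : (forall i, u i != 0) ->
  (forall i i', i != i' -> ~ p1eq (u i) (u i')) ->
  [/\ cr (u i0) (u i1) != 0 &
  exists a b, [/\ a != 0, b != 0 & u i2 = a *: u i0 + b *: u i1]].
Proof.
move=> hu du.
have c01 := cr_ne0 (hu i0) (hu i1) (du i0 i1 isT).
have c21 := cr_ne0 (hu i2) (hu i1) (du i2 i1 isT).
have c02 := cr_ne0 (hu i0) (hu i2) (du i0 i2 isT).
split => //.
have [a [b [ea eb e]]] := comb_ex (u i2) c01.
exists a, b; split => //.
- by apply/negP => /eqP a0; move: ea c21; rewrite a0 mul0r => <-; rewrite eqxx.
- by apply/negP => /eqP b0; move: eb c02; rewrite b0 mul0r => <-; rewrite eqxx.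
Qed.

Lemma exist3 (u v : 'I_3 -> 'rV[K]_2) : (forall i, u i != 0) ->
  (forall i i', i != i' -> ~ p1eq (u i) (u i')) ->
  (forall i, v i != 0) ->
  (forall i i', i != i' -> ~ p1eq (v i) (v i')) ->
  exists A, A \in unitmx /\ forall i, p1eq (u i *m A) (v i).
Proof.
move=> hu du hv dv.
have [cu [a [b [a0 b0 eu]]]] := comb3 hu du.
have [cv [a' [b' [a0' b0' ev]]]] := comb3 hv dv.
have uN : rows2 (a *: u i0) (b *: u i1) \in unitmx.
  by apply: rows2_unit; rewrite crZ !mulf_neq0.
exists (invmx (rows2 (a *: u i0) (b *: u i1)) *m rows2 (a' *: v i0) (b' *: v i1)).
split; first by rewrite unitmx_mul unitmx_inv uN rows2_unit // crZ !mulf_neq0.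
apply: ord3P.
- rewrite (@key2 _ (R2 1 0) a) //; last by rewrite mul_rows2 !mxE /= scale1r scale0r addr0.
  rewrite mul_rows2 !mxE /= scale1r scale0r addr0 scalerA.
  by apply: p1eq_inv; rewrite mulf_neq0 ?invr_eq0.
- rewrite (@key2 _ (R2 0 1) b) //; last by rewrite mul_rows2 !mxE /= scale1r scale0r add0r.
  rewrite mul_rows2 !mxE /= scale1r scale0r add0r scalerA.
  by apply: p1eq_inv; rewrite mulf_neq0 ?invr_eq0.
- rewrite (@key2 _ (R2 1 1) 1) ?oner_neq0 //; last by rewrite mul_rows2 !mxE /= !scale1r.
  rewrite mul_rows2 !mxE /= !scale1r invr1 scale1r -ev.
  by exists 1; rewrite ?oner_neq0 // scale1r.
Qed.


Lemma uniq3 (u v : 'I_3 -> 'rV[K]_2) (A C : 'M[K]_2) : (forall i, u i != 0) ->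
  (forall i i', i != i' -> ~ p1eq (u i) (u i')) ->
  (forall i, v i != 0) ->
  (forall i i', i != i' -> ~ p1eq (v i) (v i')) ->
  (forall i, p1eq (u i *m A) (v i)) -> (forall i, p1eq (u i *m C) (v i)) ->
  exists2 d, d != 0 & forall w : 'rV[K]_2, w *m C = d *: (w *m A).
Proof.
move=> hu du hv dv hA hC.
have hd i : exists2 d, d != 0 & u i *m C = d *: (u i *m A).
  have [a a0 ea] := hA i; have [b b0 eb] := hC i.
  exists (b^-1 * a); first by rewrite mulf_neq0 ?invr_eq0.
  by rewrite -scalerA -ea eb scalerA mulVf // scale1r.
have [d0 d00 e0] := hd i0; have [d1 d10 e1] := hd i1; have [d2 d20 e2] := hd i2.
have [cu [a [b [a0 b0 eu]]]] := comb3 hu du.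
have cx : cr (u i0 *m A) (u i1 *m A) != 0.
  have [a' a0' ea'] := hA i0; have [b' b0' eb'] := hA i1.
  apply/negP => /eqP h.
  have := cr_ne0 (hv i0) (hv i1) (dv i0 i1 isT).
  by rewrite ea' eb' crZ h mulr0 eqxx.
have E : (a * d0) *: (u i0 *m A) + (b * d1) *: (u i1 *m A) =
         (d2 * a) *: (u i0 *m A) + (d2 * b) *: (u i1 *m A).
  have h1 : u i2 *m C = (a * d0) *: (u i0 *m A) + (b * d1) *: (u i1 *m A).
    by rewrite eu mulmxDl -!scalemxAl e0 e1 !scalerA.
  have h2 : u i2 *m C = (d2 * a) *: (u i0 *m A) + (d2 * b) *: (u i1 *m A).
    by rewrite e2 eu mulmxDl -!scalemxAl scalerDr !scalerA.
  by rewrite -h1 -h2.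
have [E0 E1] := cr_coef cx E.
have d02 : d0 = d2 by apply: (mulfI a0); rewrite E0 mulrC.
have d12 : d1 = d2 by apply: (mulfI b0); rewrite E1 mulrC.
exists d2 => // w.
have [a' [b' [_ _ ->]]] := comb_ex w cu.
rewrite !mulmxDl -!scalemxAl e0 e1 d02 d12 scalerDr !scalerA.
by rewrite (mulrC a') (mulrC b').
Qed.

Lemma transfer (h : {rmorphism K -> K}) (u v u' v' : 'I_3 -> 'rV[K]_2) (M : 'M[K]_2)
  (s : 'S_3) : (forall i, p1eq (u i *m M) (v i)) ->
  (forall i, p1eq (map_mx h (u i)) (u' (s i))) ->
  (forall i, p1eq (map_mx h (v i)) (v' (s i))) ->
  forall j, p1eq (u' j *m map_mx h M) (v' j).
Proof.
move=> hM hu hv j.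
have e : j = s ((s^-1)%g j) by rewrite permKV.
rewrite e; set i := ((s^-1)%g j).
apply: p1eq_trans (p1eq_mul _ (p1eq_sym (hu i))) _.
apply: p1eq_trans (hv i).
rewrite -map_mxM.
case: (hM i) => c hc ->; exists (h c); first by rewrite fmorph_eq0.
by rewrite map_mxZ.
Qed.

End H.
Unset Implicit Arguments.

Lemma Qact_fix (k : fieldType) (L : fieldExtType k) (K : closedFieldType)
  (j : {rmorphism L -> K}) (h : {rmorphism K -> K}) (P : Qpt K) :
  (forall l : L, h (j l) = j l) -> Qact j h P = (map_mx h P.1, map_mx h P.2).
Proof. by move=> H; rewrite /Qact; case: excluded_middle_informative. Qed.

Lemma Qact_nfix (k : fieldType) (L : fieldExtType k) (K : closedFieldType)
  (j : {rmorphism L -> K}) (h : {rmorphism K -> K}) (P : Qpt K) :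
  ~ (forall l : L, h (j l) = j l) -> Qact j h P = (map_mx h P.2, map_mx h P.1).
Proof. by move=> H; rewrite /Qact; case: excluded_middle_informative. Qed.

Theorem lemma3p7
  (k : fieldType) (Hperf : perfect_field k)
  (K : closedFieldType) (iota : {rmorphism k -> K})
  (Halg : algebraic_over iota)
  (L : fieldExtType k) (HL2 : \dim {:L} = 2%N)
  (j : {rmorphism L -> K}) (Hj : forall c : k, j (c%:A) = iota c)
  (p q : 'I_3 -> Qpt K)
  (Hp : deg3_point iota j p) (Hq : deg3_point iota j q)
  (Hsym : forall h : {rmorphism K -> K}, is_gal iota h ->
     exists s : 'S_3, forall i : 'I_3,
       Qeq (Qact j h (p i)) (p (s i)) /\ Qeq (Qact j h (q i)) (q (s i)))
  (Hrp : distinct_rulings p) (Hrq : distinct_rulings q) :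
  exists a : autP1P1 K, in_Aut_k_QL iota j a /\
    forall i : 'I_3, Qeq (aut_apply a (p i)) (q i).
Proof.
move: Hp Hq => [vp _ _ _] [vq _ _ _].
have hx1 i : (p i).1 != 0 by case: (vp i).
have hx2 i : (p i).2 != 0 by case: (vp i).
have hy1 i : (q i).1 != 0 by case: (vq i).
have hy2 i : (q i).2 != 0 by case: (vq i).
have dx1 i i' : i != i' -> ~ p1eq (p i).1 (p i').1 by move=> /Hrp [].
have dx2 i i' : i != i' -> ~ p1eq (p i).2 (p i').2 by move=> /Hrp [].
have dy1 i i' : i != i' -> ~ p1eq (q i).1 (q i').1 by move=> /Hrq [].
have dy2 i i' : i != i' -> ~ p1eq (q i).2 (q i').2 by move=> /Hrq [].
have [A [uA hA]] := exist3 hx1 dx1 hy1 dy1.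
have [B [uB hB]] := exist3 hx2 dx2 hy2 dy2.
exists (AutP1P1 false A B); split; last first.
  by move=> i; rewrite /aut_apply /=; split; [exact: hA | exact: hB].
split; first by split.
move=> h hh P hP; have [s hs] := Hsym h hh.
rewrite /aut_apply /=.
case: (excluded_middle_informative (forall l : L, h (j l) = j l)) => hfix.
- rewrite !Qact_fix //= !map_mxM.
  have hs1 i : p1eq (map_mx h (p i).1) (p (s i)).1
    by have := (hs i).1; rewrite Qact_fix // => -[].
  have hs2 i : p1eq (map_mx h (p i).2) (p (s i)).2
    by have := (hs i).1; rewrite Qact_fix // => -[].
  have ht1 i : p1eq (map_mx h (q i).1) (q (s i)).1
    by have := (hs i).2; rewrite Qact_fix // => -[].
  have ht2 i : p1eq (map_mx h (q i).2) (q (s i)).2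
    by have := (hs i).2; rewrite Qact_fix // => -[].
  have [d d0 ed] := uniq3 hx1 dx1 hy1 dy1 (transfer hA hs1 ht1) hA.
  have [e e0 ee] := uniq3 hx2 dx2 hy2 dy2 (transfer hB hs2 ht2) hB.
  by split; [exists d; rewrite ?ed | exists e; rewrite ?ee].
- rewrite !Qact_nfix //= !map_mxM.
  have hs1 i : p1eq (map_mx h (p i).2) (p (s i)).1
    by have := (hs i).1; rewrite Qact_nfix // => -[].
  have hs2 i : p1eq (map_mx h (p i).1) (p (s i)).2
    by have := (hs i).1; rewrite Qact_nfix // => -[].
  have ht1 i : p1eq (map_mx h (q i).2) (q (s i)).1
    by have := (hs i).2; rewrite Qact_nfix // => -[].
  have ht2 i : p1eq (map_mx h (q i).1) (q (s i)).2
    by have := (hs i).2; rewrite Qact_nfix // => -[].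
  have [d d0 ed] := uniq3 hx1 dx1 hy1 dy1 (transfer hB hs1 ht1) hA.
  have [e e0 ee] := uniq3 hx2 dx2 hy2 dy2 (transfer hA hs2 ht2) hB.
  by split; [exists d; rewrite ?ed | exists e; rewrite ?ee].
Qed.
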